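(* Let $\mathbb{A}=(\mathbb{L},(\lozenge_i)_{i\in\mathsf{Ag}},(\Box_i)_{i\in\mathsf{Ag}})$ be an epistemic Heyting algebra and let $\mathbb{E}=(E,(\sim_i)_{i\in\mathsf{Ag}},(P_i)_{i\in\mathsf{Ag}},\Phi,\mathsf{pre})$ be a probabilistic event structure over $\mathbb{A}$. Then the intermediate algebra $\prod_{\mathbb{E}}\mathbb{A}$ is an epistemic Heyting algebra.
   Context: Fix a set $\mathsf{Ag}$ of agents. A monadic Heyting algebra is a Heyting algebra $\mathbb{L}$ with, for each $i\in\mathsf{Ag}$, monotone unary operations $\lozenge_i,\Box_i$ such that for all $a,b$: $a\leq\lozenge_i a$; $\Box_i a\leq a$; $\lozenge_i(a\vee b)\leq\lozenge_i a\vee\lozenge_i b$; $\Box_i(a\to b)\leq\Box_i a\to\Box_i b$; $\lozenge_i a\leq\Box_i\lozenge_i a$; $\lozenge_i\Box_i a\leq\Box_i a$; $\Box_i(a\to b)\leq\lozenge_i a\to\lozenge_i b$; $\lozenge_i\bot\leq\bot$; $\top\leq\Box_i\top$. An epistemic Heyting algebra is a finite monadic Heyting algebra with $\lozenge_i a\vee\neg\lozenge_i a=\top$ for all $i,a$. A pre-ordered multiset on a set $X$ is a multiset of elements of $X$ in which the $n$ copies $x_1,\dots,x_n$ of any element $x$ of multiplicity $n$ carry the linear order $x_1\prec\cdots\prec x_n$. A probabilistic event structure over $\mathbb{A}$ is a tuple $(E,(\sim_i),(P_i),\Phi,\mathsf{pre})$ where: $E$ is a non-empty finite set; each $\sim_i$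 is an equivalence relation on $E$; each $P_i:E\to\,]0,1]$ satisfies $\sum\{P_i(e')\mid e'\sim_i e\}=1$ for all $e$; $\Phi$ is a finite pre-ordered multiset on $\mathbb{A}$ such that any $a,b\in\Phi$ arising from distinct elements of $\mathbb{A}$ satisfy $a\wedge b=\bot$ or $a<b$ or $b<a$; $\mathsf{pre}$ assigns to each $a\in\Phi$ a probability distribution $\mathsf{pre}(\bullet\mid a)$ on $E$; and for all $a\in\Phi$, $e\in E$, if $\mathsf{pre}(e\mid a)=0$ then $\mathsf{pre}(e\mid b)=0$ for all $b\in\Phi$ with $a<b$ (if $a,b$ arise from distinct elements) or $a\prec b$ (if they are copies of the same element). The intermediate algebra $\prod_{\mathbb{E}}\mathbb{A}=(\prod_{|E|}\mathbb{L},(\lozenge'_i),(\Box'_i))$ has as carrier the set of all maps $f:E\to\mathbb{A}$ with the pointwise Heyting algebra operations, and $(\lozenge'_i f)(e)=\bigvee\{\lozenge_i f(e')\mid e'\sim_i e\}$, $(\Box'_i f)(e)=\bigwedge\{\Box_i f(e')\mid e'\sim_i e\}$. *)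

(* Defs.v *)
From Stdlib Require Import Reals List.
From mathcomp Require Import all_boot all_order all_algebra.
From mathcomp Require Import Rstruct.
Set Implicit Arguments. Unset Strict Implicit. Unset Printing Implicit Defensive.
Import GRing.Theory Num.Theory.

Record HAops (T : Type) := HAOps {
  hle : T -> T -> Prop;
  hmeet : T -> T -> T;
  hjoin : T -> T -> T;
  himpl : T -> T -> T;
  hbot : T;
  htop : T }.

Definition is_heyting (T : Type) (O : HAops T) : Prop :=
  ((forall a, hle O a a) /\
      (forall a b c, hle O a b -> hle O b c -> hle O a c) /\
      (forall a b, hle O a b -> hle O b a -> a = b) /\
      (forall a b, hle O (hmeet O a b) a /\ hle O (hmeet O a b) b /\
         forall c, hle O c a -> hle O c b -> hle O c (hmeet O a b)) /\
      (forall a b, hle O a (hjoin O a b) /\ hle O b (hjoin O a b) /\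
         forall c, hle O a c -> hle O b c -> hle O (hjoin O a b) c) /\
      (forall a, hle O (hbot O) a /\ hle O a (htop O)) /\
      (forall a b c, hle O (hmeet O c a) b <-> hle O c (himpl O a b))).

Definition hneg (T : Type) (O : HAops T) (a : T) : T := himpl O a (hbot O).
Definition hlt (T : Type) (O : HAops T) (a b : T) : Prop := hle O a b /\ a <> b.

Definition is_monadic_HA (Ag T : Type) (O : HAops T) (dia box : Ag -> T -> T)
  : Prop :=
  is_heyting O /\
  forall i : Ag,
    ((forall a b, hle O a b -> hle O (dia i a) (dia i b)) /\
      (forall a b, hle O a b -> hle O (box i a) (box i b)) /\
      (forall a, hle O a (dia i a)) /\
      (forall a, hle O (box i a) a) /\
      (forall a b, hle O (dia i (hjoin O a b)) (hjoin O (dia i a) (dia i b))) /\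
      (forall a b, hle O (box i (himpl O a b)) (himpl O (box i a) (box i b))) /\
      (forall a, hle O (dia i a) (box i (dia i a))) /\
      (forall a, hle O (dia i (box i a)) (box i a)) /\
      (forall a b, hle O (box i (himpl O a b)) (himpl O (dia i a) (dia i b))) /\
      (hle O (dia i (hbot O)) (hbot O)) /\
      (hle O (htop O) (box i (htop O)))).

Definition finite_carrier (T : Type) : Prop := exists s : list T, forall x, In x s.

Definition is_epistemic_HA (Ag T : Type) (O : HAops T) (dia box : Ag -> T -> T)
  : Prop :=
  [/\ finite_carrier T, is_monadic_HA O dia box &
      forall i a, hjoin O (dia i a) (hneg O (dia i a)) = htop O].

(* E is a finite type; sim i is the (boolean) relation ~_i; P i the
   probability assignment; the finite pre-ordered multiset Phi is given as
   a family phi : 'I_n -> T (element k of Phi is the value phi k); copies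
   of the same element are linearly ordered by their position (k < l);
   pre k is the distribution pre(. | phi k) on E. *)
Definition prob_event_structure (Ag T : Type) (O : HAops T)
  (E : finType) (sim : Ag -> rel E) (P : Ag -> E -> R)
  (n : nat) (phi : 'I_n -> T) (pre : 'I_n -> E -> R) : Prop :=
  ((0 < #|E|)%N /\
      (forall i, [/\ reflexive (sim i), symmetric (sim i) & transitive (sim i)]) /\
      (forall i e, (0 < P i e)%R /\ (P i e <= 1)%R) /\
      (forall i e, (\sum_(e' | sim i e' e) P i e')%R = 1%R) /\
      (forall k l, phi k <> phi l ->
         hmeet O (phi k) (phi l) = hbot O \/ hlt O (phi k) (phi l)
         \/ hlt O (phi l) (phi k)) /\
      (forall k, (forall e, (0 <= pre k e)%R) /\ (\sum_e pre k e)%R = 1%R) /\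
      (forall k l e, pre k e = 0%R ->
         (phi k <> phi l /\ hlt O (phi k) (phi l)) \/
         (phi k = phi l /\ (k < l)%N) ->
         pre l e = 0%R)).

Definition pointwise_ops (T : Type) (O : HAops T) (E : finType)
  : HAops (E -> T) :=
  HAOps (fun f g => forall e, hle O (f e) (g e))
        (fun f g e => hmeet O (f e) (g e))
        (fun f g e => hjoin O (f e) (g e))
        (fun f g e => himpl O (f e) (g e))
        (fun _ => hbot O) (fun _ => htop O).

Definition inter_dia (Ag T : Type) (O : HAops T) (dia : Ag -> T -> T)
  (E : finType) (sim : Ag -> rel E) (i : Ag) (f : E -> T) : E -> T :=
  fun e => \big[hjoin O / hbot O]_(e' | sim i e' e) dia i (f e').

Definition inter_box (Ag T : Type) (O : HAops T) (box : Ag -> T -> T)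
  (E : finType) (sim : Ag -> rel E) (i : Ag) (f : E -> T) : E -> T :=
  fun e => \big[hmeet O / htop O]_(e' | sim i e' e) box i (f e').

(* Main.v *)
Require Import Defs.
From Stdlib Require Import Reals.
From Stdlib Require List FunctionalExtensionality.
From mathcomp Require Import all_boot all_order all_algebra.
From mathcomp Require Import Rstruct.
Set Implicit Arguments. Unset Strict Implicit. Unset Printing Implicit Defensive.

Lemma big_join_le T (O : HAops T) (HO : is_heyting O) (I : Type) (r : seq I)
  (P : pred I) (F : I -> T) c :
  (forall j, P j -> hle O (F j) c) -> hle O (\big[hjoin O/hbot O]_(j <- r | P j) F j) c.
Proof.
case: HO => _ [_ [_ [_ [Hj [Hb _]]]]] H.
apply: (big_ind (fun x => hle O x c)) => //.
- by case: (Hb c).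
- by move=> x y hx hy; case: (Hj x y) => _ [_ HH]; apply: (HH).
Qed.

Lemma le_big_meet T (O : HAops T) (HO : is_heyting O) (I : Type) (r : seq I)
  (P : pred I) (F : I -> T) c :
  (forall j, P j -> hle O c (F j)) -> hle O c (\big[hmeet O/htop O]_(j <- r | P j) F j).
Proof.
case: HO => _ [_ [_ [Hm [_ [Hb _]]]]] H.
apply: (big_ind (fun x => hle O c x)) => //.
- by case: (Hb c).
- by move=> x y hx hy; case: (Hm x y) => _ [_ HH]; apply: (HH).
Qed.

Lemma le_big_join T (O : HAops T) (HO : is_heyting O) (I : eqType) (r : seq I)
  (P : pred I) (F : I -> T) j :
  j \in r -> P j -> hle O (F j) (\big[hjoin O/hbot O]_(j <- r | P j) F j).
Proof.
case: HO => Hr [Ht [_ [_ [Hj _]]]].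
elim: r => [//|x r IH]; rewrite big_cons in_cons => /orP [/eqP <-|jr] Pj.
- by rewrite Pj; case: (Hj (F j) (\big[hjoin O/hbot O]_(j0 <- r | P j0) F j0)).
- case: (P x); last exact: IH.
  apply: (Ht) (IH jr Pj) _.
  by case: (Hj (F x) (\big[hjoin O/hbot O]_(j0 <- r | P j0) F j0)) => _ [].
Qed.

Lemma big_meet_le T (O : HAops T) (HO : is_heyting O) (I : eqType) (r : seq I)
  (P : pred I) (F : I -> T) j :
  j \in r -> P j -> hle O (\big[hmeet O/htop O]_(j <- r | P j) F j) (F j).
Proof.
case: HO => Hr [Ht [_ [Hm _]]].
elim: r => [//|x r IH]; rewrite big_cons in_cons => /orP [/eqP <-|jr] Pj.
- by rewrite Pj; case: (Hm (F j) (\big[hmeet O/htop O]_(j0 <- r | P j0) F j0)).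
- case: (P x); last exact: IH.
  apply: (Ht) _ (IH jr Pj).
  by case: (Hm (F x) (\big[hmeet O/htop O]_(j0 <- r | P j0) F j0)) => _ [].
Qed.

Lemma fun_list (E : finType) (T : Type) (s : list T) (d : T) :
  (forall x : T, List.In x s) ->
  forall L : seq E, exists FL : list (E -> T), forall f : E -> T,
    exists g, List.In g FL /\ forall e, e \in L -> g e = f e.
Proof.
move=> Hs; elim=> [|x L [FL IH]].
  by exists [:: fun _ => d] => f; exists (fun _ => d); split; [left|].
exists (List.flat_map (fun g => List.map (fun t => fun e => if e == x then t else g e) s) FL).
move=> f; case: (IH f) => g [gin Hg].
exists (fun e => if e == x then f x else g e); split.
  apply/List.in_flat_map; exists g; split => //.
  by apply/List.in_map_iff; exists (f x).
move=> e; rewrite in_cons; case: eqP => [-> //|_ /= eL]; exact: Hg.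
Qed.

Theorem proposition3 (Ag T : Type) (O : HAops T) (dia box : Ag -> T -> T)
  (E : finType) (sim : Ag -> rel E) (P : Ag -> E -> R)
  (n : nat) (phi : 'I_n -> T) (pre : 'I_n -> E -> R) :
  is_epistemic_HA O dia box ->
  prob_event_structure O sim P phi pre ->
  is_epistemic_HA (pointwise_ops O E) (inter_dia O dia sim) (inter_box O box sim).
Proof.
rewrite /is_epistemic_HA /prob_event_structure /is_monadic_HA /finite_carrier.
case=> [[s Hs] [HO HM] Hep] [_ [Heq _]].
have HO' := HO.
case: HO' => Hr [Ht [Ha [Hm [Hj [Hb Hres]]]]].
have meetl a b : hle O (hmeet O a b) a by case: (Hm a b).
have meetr a b : hle O (hmeet O a b) b by case: (Hm a b) => _ [].
have meetU a b c : hle O c a -> hle O c b -> hle O c (hmeet O a b)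
  by case: (Hm a b) => _ [_ HH]; apply: (HH).
have joinl a b : hle O a (hjoin O a b) by case: (Hj a b).
have joinr a b : hle O b (hjoin O a b) by case: (Hj a b) => _ [].
have joinU a b c : hle O a c -> hle O b c -> hle O (hjoin O a b) c
  by case: (Hj a b) => _ [_ HH]; apply: (HH).
have mp a b : hle O (hmeet O (himpl O a b) a) b by apply/Hres; apply: (Hr).
have meetC a b : hle O (hmeet O a b) (hmeet O b a) by apply: (meetU).
have meetM a b a' b' : hle O a a' -> hle O b b' -> hle O (hmeet O a b) (hmeet O a' b').
  by move=> h1 h2; apply: (meetU); [apply: (Ht) h1|apply: (Ht) h2].
have joinM a b a' b' : hle O a a' -> hle O b b' -> hle O (hjoin O a b) (hjoin O a' b').
  by move=> h1 h2; apply: (joinU); [apply: (Ht) h1 _|apply: (Ht) h2 _].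
have simeq i e e' : sim i e e' -> sim i e' e /\ forall x, sim i x e = sim i x e'.
  case: (Heq i) => rf sy tr h; split; first by rewrite sy.
  move=> x; apply/idP/idP => h'; first exact: (tr _ _ _ h' h).
  by apply: (tr _ _ _ h'); rewrite sy.
split.
-
  have [FL HFL] := fun_list (hbot O) Hs (enum E).
  exists FL => f; case: (HFL f) => g [gin Hg].
  have -> : f = g by apply: FunctionalExtensionality.functional_extensionality => e;
    rewrite Hg // mem_enum.
  exact: gin.
- split.
  +
    split; first by move=> a e; apply: (Hr).
    split; first by move=> a b c h1 h2 e; apply: (Ht) (h1 e) (h2 e).
    split; first by move=> a b h1 h2;
      apply: FunctionalExtensionality.functional_extensionality => e; apply: (Ha).
    split; first by move=> a b /=; split; [|split] => [e|e|c h1 h2 e]; auto.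
    split; first by move=> a b /=; split; [|split] => [e|e|c h1 h2 e]; auto.
    split; first by move=> a /=; split => e; case: (Hb (a e)).
    move=> a b c /=; split => h e; apply/Hres; exact: h.
  + move=> i.
    have [Hdm [Hbm [Hd1 [Hb1 [Hdj [Hbi [Hdb [Hdb2 [Hbdi [Hd0 Hb0]]]]]]]]]] := HM i.
    have rf : reflexive (sim i) by case: (Heq i).
    have Qdia : forall a, hle O (dia i (dia i a)) (dia i a).
      move=> a; apply: (Ht) (Hb1 (dia i a)); apply: (Ht) (Hdb2 (dia i a)).
      by apply: (Hdm); apply: (Hdb).
    have Qjoin : forall (r : seq E) (Pr : pred E) (F : E -> T),
      (forall j, Pr j -> hle O (dia i (F j)) (F j)) ->
      hle O (dia i (\big[hjoin O/hbot O]_(j <- r | Pr j) F j))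
            (\big[hjoin O/hbot O]_(j <- r | Pr j) F j).
      move=> r Pr F HF.
      apply: (big_ind (fun x => hle O (dia i x) x)) => //.
      move=> x y hx hy; apply: (Ht) (Hdj x y) _; exact: joinM.
    have Qmeet : forall (r : seq E) (Pr : pred E) (F : E -> T),
      (forall j, Pr j -> hle O (dia i (F j)) (F j)) ->
      hle O (dia i (\big[hmeet O/htop O]_(j <- r | Pr j) F j))
            (\big[hmeet O/htop O]_(j <- r | Pr j) F j).
      move=> r Pr F HF.
      apply: (big_ind (fun x => hle O (dia i x) x)) => //.
      * by case: (Hb (dia i (htop O))).
      * move=> x y hx hy; apply: (meetU).
        - by apply: (Ht) hx; apply: (Hdm).
        - by apply: (Ht) hy; apply: (Hdm).
    have Dfix : forall f e, dia i (inter_dia O dia sim i f e) = inter_dia O dia sim i f e.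
      move=> f e; apply: (Ha); first by apply: (Qjoin) => j _; apply: (Qdia).
      exact: Hd1.
    have Dcl : forall f e e', sim i e' e -> inter_dia O dia sim i f e' = inter_dia O dia sim i f e.
      move=> f e e' /simeq [_ h]; rewrite /inter_dia.
      by apply: eq_bigl => x; rewrite h.
    have Bcl : forall f e e', sim i e' e -> inter_box O box sim i f e' = inter_box O box sim i f e.
      move=> f e e' /simeq [_ h]; rewrite /inter_box.
      by apply: eq_bigl => x; rewrite h.
    have Djin : forall f e e', sim i e' e -> hle O (dia i (f e')) (inter_dia O dia sim i f e).
      by move=> f e e' h; apply: le_big_join => //; rewrite mem_index_enum.
    have Bmin : forall f e e', sim i e' e -> hle O (inter_box O box sim i f e) (box i (f e')).
      by move=> f e e' h; apply: big_meet_le => //; rewrite mem_index_enum.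
    split.
      move=> a b h e; apply: big_join_le => // e' s'.
      apply: (Ht) (Djin _ _ _ s'); exact: Hdm.
    split.
      move=> a b h e; apply: le_big_meet => // e' s'.
      apply: (Ht) (Bmin _ _ _ s') _; exact: Hbm.
    split.
      move=> a e; apply: (Ht) (Hd1 _) _; exact: Djin.
    split.
      move=> a e; apply: (Ht) (Bmin _ _ _ (rf e)) _; exact: Hb1.
    split.
      move=> a b e; apply: big_join_le => // e' s'.
      apply: (Ht) (Hdj _ _) _; apply: (joinM); exact: Djin.
    split.
      move=> a b e /=; apply/Hres; apply: le_big_meet => // e' s'.
      apply: (Ht) (mp (box i (a e')) (box i (b e'))).
      apply: (meetM); last exact: Bmin.
      exact: (Ht _ _ _ (Bmin _ _ _ s') (Hbi _ _)).
    split.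
      move=> a e; apply: le_big_meet => // e' s'.
      rewrite (Dcl _ _ _ s'); have hh := Hdb (inter_dia O dia sim i a e); rewrite Dfix in hh; exact: hh.
    split.
      move=> a e; apply: big_join_le => // e' s'.
      rewrite (Bcl _ _ _ s'); apply: (Qmeet) => j _; exact: Hdb2.
    split.
      move=> a b e /=; apply/Hres; apply: (Ht) (meetC _ _) _; apply/Hres.
      apply: big_join_le => // e' s'; apply/Hres; apply: (Ht) (meetC _ _) _.
      apply: (Ht) (Djin _ _ _ s'); apply: (Ht) (mp (dia i (a e')) (dia i (b e'))).
      apply: (meetM); last exact: Hr.
      exact: (Ht _ _ _ (Bmin _ _ _ s') (Hbdi _ _)).
    split.
      by move=> e; apply: big_join_le => // e' _.
    by move=> e; apply: le_big_meet => // e' _.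
- move=> i f /=; rewrite /hneg /=.
  apply: FunctionalExtensionality.functional_extensionality => e.
  have := Hep i (inter_dia O dia sim i f e); rewrite /hneg.
  have [Hdm [Hbm [Hd1 [Hb1 [Hdj [Hbi [Hdb [Hdb2 [Hbdi [Hd0 Hb0]]]]]]]]]] := HM i.
  have Qdia : forall a, hle O (dia i (dia i a)) (dia i a).
    move=> a; apply: (Ht) (Hb1 (dia i a)); apply: (Ht) (Hdb2 (dia i a)).
    by apply: (Hdm); apply: (Hdb).
  have -> // : dia i (inter_dia O dia sim i f e) = inter_dia O dia sim i f e.
  apply: (Ha); last exact: Hd1.
  apply: (big_ind (fun x => hle O (dia i x) x)) => //.
  - move=> x y hx hy; apply: (Ht) (Hdj x y) _; exact: joinM.
Qed.
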